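(* Let $\mathcal{P}=\langle a_1,\dots,a_{3s},T\rangle$ be a 3-Partition instance satisfying properties (1)–(3) below, and let $\mathcal{G}(\mathcal{P})$ be the Tetris game constructed below. If $\mathcal{P}$ is a ''yes'' instance, then there is a trajectory sequence for $\mathcal{G}(\mathcal{P})$ that clears every row of the gameboard (leaving it completely empty) without triggering a loss.
   Context: 3-Partition: given non-negative integers $a_1,\dots,a_{3s}$ and $T$ with $T/4<a_i<T/2$ and $\sum a_i=sT$, decide whether $\{1,\dots,3s\}$ can be partitioned into $s$ sets $A_1,\dots,A_s$ with $\sum_{i\in A_j}a_i=T$ for all $j$ (a ''yes'' instance). Properties: (1) any subset summing to $T$ has exactly 3 elements; (2) $T$ is even; (3) any subset whose sum is not $T$ has sum differing from $T$ by at least $3s$. Tetris rules: an $m\times n$ gameboard of filled/unfilled gridsquares (rows numbered $1$ to $m$ from the bottom); the seven tetrominoes $\mathsf{Sq}$ (square), $\mathsf{LG}$, $\mathsf{RG}$ (left/right ''gun'', i.e. J/L shapes), $\mathsf{LS}$, $\mathsf{RS}$ (left/right ''snake'', i.e. S/Z shapes), $\mathsf{I}$ (four in a line), $\mathsf{T}$; pieces enter at the top, may be rotated (instantaneous rotation about a fixed center of the piece, legal iff the result overlaps no filled gridsquare), slid left/right one column, dropped one row when the gridsquares beneath are open, and fixed when a gridsquare below is filled; completely filled rows are cleared with higher rows moving down; a loss occurs if the next piece's initial position is blocked. Construction of $\mathcal{G}(\mathcal{P})$: the board has $6s+3$ columns and $6T+22+3s+c$ rows, where $c$ is the constant neighborhood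 size of the rotation model; the top $3s+c$ rows are empty. In the bottom $6T+22$ rows, the columns are grouped into $s$ buckets of six columns followed by a three-column lock. In each bucket: columns 1 and 2 are empty except their lowest four rows are filled; column 3 is completely empty; columns 4 and 5 are filled in every row $h\not\equiv 5\pmod 6$ and empty in every row $h\equiv 5\pmod 6$; column 6 is completely filled. In the lock (counting only the bottom $6T+22$ rows, whose top row is row $6T+22$): its first column is filled except in its two highest rows; its second column is filled except in its highest row; its third column is empty except in its second-highest row. The piece sequence: for each $i=1,\dots,3s$ in order, the pieces $\mathsf{I},\mathsf{LG},\mathsf{Sq}$, then the block $\mathsf{LG},\mathsf{LS},\mathsf{LG},\mathsf{LG},\mathsf{Sq}$ repeated $a_i$ times, then $\mathsf{Sq},\mathsf{Sq}$; after these, $s$ copies of $\mathsf{I}$, then one $\mathsf{RG}$, then $3T/2+5$ copies of $\mathsf{I}$. *)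

(* Defs.v *)
From Stdlib Require Import ZArith List Arith Bool.
Import ListNotations.

Inductive piece := Sq | LG | RG | LS | RS | Ip | Tp.

(* Each piece lives in a k x k bounding box; rotation is rotation of the
   box by 90 degrees about its centre (a fixed centre of the piece).
   Offsets (dx, dy): dx = columns to the right, dy = rows upward, measured
   from the bottom-left square of the box. *)
Definition box_size (p : piece) : Z :=
  match p with Sq => 2 | Ip => 4 | _ => 3 end%Z.

Definition spawn_shape (p : piece) : list (Z * Z) :=
  match p with
  | Sq => [(0,0); (1,0); (0,1); (1,1)]
  | Ip => [(0,2); (1,2); (2,2); (3,2)]
  | Tp => [(0,1); (1,1); (2,1); (1,2)]
  | LG => [(0,2); (0,1); (1,1); (2,1)]
  | RG => [(2,2); (0,1); (1,1); (2,1)]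
  | LS => [(0,2); (1,2); (1,1); (2,1)]
  | RS => [(0,1); (1,1); (1,2); (2,2)]
  end%Z.

Definition rot_cw (k : Z) (c : Z * Z) : Z * Z := (snd c, k - 1 - fst c)%Z.

Definition orient_cells (p : piece) (r : nat) : list (Z * Z) :=
  map (fun c => Nat.iter (r mod 4) (rot_cw (box_size p)) c) (spawn_shape p).

(* Neighbourhood size c of this rotation model (all rotations happen
   inside a 4 x 4 box). *)
Definition rot_nbhd : nat := 4.

(* State of the falling piece: bottom-left corner of its box and its
   orientation. *)
Record pstate := mkPS { px : Z; py : Z; pr : nat }.

Definition piece_cells (p : piece) (st : pstate) : list (Z * Z) :=
  map (fun c => (px st + fst c, py st + snd c)%Z) (orient_cells p (pr st)).

Inductive move := MLeft | MRight | MDown | MRotCW | MRotCCW.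

Definition apply_move (mv : move) (st : pstate) : pstate :=
  match mv with
  | MLeft   => mkPS (px st - 1)%Z (py st) (pr st)
  | MRight  => mkPS (px st + 1)%Z (py st) (pr st)
  | MDown   => mkPS (px st) (py st - 1)%Z (pr st)
  | MRotCW  => mkPS (px st) (py st) ((pr st + 1) mod 4)
  | MRotCCW => mkPS (px st) (py st) ((pr st + 3) mod 4)
  end.

(* Boards: B x y = true iff the square in column x, row y is filled.     *)
(* Columns 1..n from the left, rows 1..m from the bottom.               *)

Definition board := nat -> nat -> bool.

Definition cell_free (n m : nat) (B : board) (c : Z * Z) : bool :=
  (1 <=? fst c)%Z && (fst c <=? Z.of_nat n)%Z &&
  (1 <=? snd c)%Z && (snd c <=? Z.of_nat m)%Z &&
  negb (B (Z.to_nat (fst c)) (Z.to_nat (snd c))).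

Definition fits (n m : nat) (B : board) (p : piece) (st : pstate) : bool :=
  forallb (cell_free n m B) (piece_cells p st).

Definition spawn (n m : nat) (p : piece) : pstate :=
  mkPS (Z.of_nat (n / 2) - 1)%Z (Z.of_nat m - box_size p + 1)%Z 0.

Fixpoint follow (n m : nat) (B : board) (p : piece) (mvs : list move)
    (st : pstate) : option pstate :=
  match mvs with
  | [] => Some st
  | mv :: r =>
      let st' := apply_move mv st in
      if fits n m B p st' then follow n m B p r st' else None
  end.

Definition add_cells (B : board) (cs : list (Z * Z)) : board :=
  fun x y => B x y ||
    existsb (fun c => Z.eqb (fst c) (Z.of_nat x) && Z.eqb (snd c) (Z.of_nat y)) cs.

Definition row_full (n : nat) (B : board) (y : nat) : bool :=
  forallb (fun x => B x y) (seq 1 n).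

(* clear completely filled rows; higher rows move down, empty rows enter
   at the top *)
Definition clear_rows (n m : nat) (B : board) : board :=
  let kept := filter (fun y => negb (row_full n B y)) (seq 1 m) in
  fun x y => if (1 <=? y) && (y <=? length kept)
             then B x (nth (y - 1) kept 0) else false.

(* One piece: it must appear at its (unblocked) initial position, perform
   legal moves, and is fixed once a further drop is impossible.  None
   signals a loss or an illegal trajectory. *)
Definition place (n m : nat) (B : board) (p : piece) (mvs : list move)
    : option board :=
  let st0 := spawn n m p in
  if fits n m B p st0 then
    match follow n m B p mvs st0 with
    | Some st =>
        if fits n m B p (apply_move MDown st) then None
        else Some (clear_rows n m (add_cells B (piece_cells p st)))
    | None => None
    end
  else None.

Fixpoint play (n m : nat) (B : board) (ps : list piece)
    (traj : list (list move)) : option board :=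
  match ps, traj with
  | [], [] => Some B
  | p :: ps', t :: tr' =>
      match place n m B p t with
      | Some B' => play n m B' ps' tr'
      | None => None
      end
  | _, _ => None
  end.

(* a = [a_1; ...; a_{3s}], indices 0 .. 3s-1; a subset is a selector *)
Definition sum_sel (a : list nat) (sel : nat -> bool) : nat :=
  list_sum (map (fun i => if sel i then nth i a 0 else 0) (seq 0 (length a))).

Definition card_sel (a : list nat) (sel : nat -> bool) : nat :=
  length (filter sel (seq 0 (length a))).

Definition three_partition_instance (s T : nat) (a : list nat) : Prop :=
  length a = 3 * s /\
  (forall i, i < 3 * s -> T < 4 * nth i a 0 /\ 2 * nth i a 0 < T) /\
  list_sum a = s * T.

Definition tp_prop1 (s T : nat) (a : list nat) : Prop :=
  forall sel, sum_sel a sel = T -> card_sel a sel = 3.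
Definition tp_prop2 (T : nat) : Prop := Nat.Even T.
Definition tp_prop3 (s T : nat) (a : list nat) : Prop :=
  forall sel, sum_sel a sel <> T ->
    sum_sel a sel + 3 * s <= T \/ T + 3 * s <= sum_sel a sel.

(* partition into A_0..A_{s-1}: element i goes to block g i *)
Definition yes_instance (s T : nat) (a : list nat) : Prop :=
  exists g : nat -> nat,
    (forall i, i < 3 * s -> g i < s) /\
    (forall j, j < s -> sum_sel a (fun i => Nat.eqb (g i) j) = T).

Definition G_width (s : nat) : nat := 6 * s + 3.
Definition G_height (s T : nat) : nat := 6 * T + 22 + 3 * s + rot_nbhd.

Definition G_init (s T : nat) : board := fun x y =>
  if (1 <=? x) && (x <=? 6 * s + 3) && (1 <=? y) && (y <=? 6 * T + 22) then
    if x <=? 6 * s then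
      (* column (x-1) mod 6 + 1 of a bucket *)
      match (x - 1) mod 6 with
      | 0 | 1 => y <=? 4
      | 2 => false
      | 3 | 4 => negb (Nat.eqb (y mod 6) 5)
      | _ => true
      end
    else
      (* lock column x - 6s *)
      match x - 6 * s with
      | 1 => y <=? 6 * T + 20
      | 2 => y <=? 6 * T + 21
      | _ => Nat.eqb y (6 * T + 21)
      end
  else false.

Definition G_pieces (s T : nat) (a : list nat) : list piece :=
  flat_map (fun ai => [Ip; LG; Sq] ++ concat (repeat [LG; LS; LG; LG; Sq] ai)
                      ++ [Sq; Sq]) a
  ++ repeat Ip s ++ [RG] ++ repeat Ip (3 * T / 2 + 5).

(* Main.v *)
Require Import Defs.
From Stdlib Require Import ZArith List Arith Bool Lia.
Import ListNotations.


Ltac elim_dm :=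
  repeat match goal with
  | |- context [?a mod ?b] =>
     let r := fresh "r" in let d := fresh "d" in
     pose proof (Nat.div_mod_eq a b); pose proof (Nat.mod_upper_bound a b ltac:(lia));
     set (r := a mod b) in *; set (d := a / b) in *; clearbody r d
  | H : context [?a mod ?b] |- _ =>
     let r := fresh "r" in let d := fresh "d" in
     pose proof (Nat.div_mod_eq a b); pose proof (Nat.mod_upper_bound a b ltac:(lia));
     set (r := a mod b) in *; set (d := a / b) in *; clearbody r d
  | |- context [?a / ?b] =>
     let r := fresh "r" in let d := fresh "d" in
     pose proof (Nat.div_mod_eq a b); pose proof (Nat.mod_upper_bound a b ltac:(lia));
     set (r := a mod b) in *; set (d := a / b) in *; clearbody r d
  | H : context [?a / ?b] |- _ =>
     let r := fresh "r" in let d := fresh "d" in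
     pose proof (Nat.div_mod_eq a b); pose proof (Nat.mod_upper_bound a b ltac:(lia));
     set (r := a mod b) in *; set (d := a / b) in *; clearbody r d
  end.
Ltac nlia := elim_dm; lia.

Ltac b2p := repeat (rewrite ?orb_true_iff, ?andb_true_iff, ?orb_false_iff, ?andb_false_iff,
   ?negb_true_iff, ?negb_false_iff, ?Nat.eqb_eq, ?Nat.eqb_neq, ?Nat.leb_le, ?Nat.leb_gt,
   ?Nat.ltb_lt, ?Nat.ltb_ge in *).
Ltac bsolve := try apply Bool.eq_iff_eq_true; b2p; nlia.

Definition beq (n m : nat) (B1 B2 : board) : Prop :=
  forall x y, 1 <= x <= n -> 1 <= y <= m -> B1 x y = B2 x y.

Lemma beq_sym n m B1 B2 : beq n m B1 B2 -> beq n m B2 B1.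
Proof. intros H x y ? ?; symmetry; auto. Qed.
Lemma beq_trans n m B1 B2 B3 : beq n m B1 B2 -> beq n m B2 B3 -> beq n m B1 B3.
Proof. intros H1 H2 x y ? ?; rewrite H1; auto. Qed.

Lemma cell_free_beq n m B1 B2 c : beq n m B1 B2 -> cell_free n m B1 c = cell_free n m B2 c.
Proof.
  intros H. destruct c as [a b]. unfold cell_free; simpl.
  destruct (1 <=? a)%Z eqn:E1; simpl; auto.
  destruct (a <=? Z.of_nat n)%Z eqn:E2; simpl; auto.
  destruct (1 <=? b)%Z eqn:E3; simpl; auto.
  destruct (b <=? Z.of_nat m)%Z eqn:E4; simpl; auto.
  apply Z.leb_le in E1, E2, E3, E4.
  rewrite H; auto; lia.
Qed.

Lemma forallb_ext' {A} (f g : A -> bool) l : (forall x, f x = g x) -> forallb f l = forallb g l.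
Proof. intros H; induction l; simpl; congruence. Qed.

Lemma fits_beq n m B1 B2 p st : beq n m B1 B2 -> fits n m B1 p st = fits n m B2 p st.
Proof. intros H; unfold fits; apply forallb_ext'; intros; apply cell_free_beq; auto. Qed.

Lemma follow_beq n m B1 B2 p mvs st : beq n m B1 B2 -> follow n m B1 p mvs st = follow n m B2 p mvs st.
Proof.
  intros H; revert st; induction mvs; intros st; simpl; auto.
  rewrite (fits_beq n m B1 B2); auto. destruct (fits n m B2 p (apply_move a st)); auto.
Qed.

Lemma add_cells_beq n m B1 B2 cs : beq n m B1 B2 -> beq n m (add_cells B1 cs) (add_cells B2 cs).
Proof. intros H x y ? ?; unfold add_cells; rewrite H; auto. Qed.

Lemma forallb_ext_in' {A} (f g : A -> bool) l : (forall x, In x l -> f x = g x) -> forallb f l = forallb g l.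
Proof. intros H; induction l; simpl in *; auto. rewrite H, IHl; auto. Qed.

Lemma filter_ext_in' {A} (f g : A -> bool) l : (forall x, In x l -> f x = g x) -> filter f l = filter g l.
Proof. intros H; induction l; simpl in *; auto. rewrite H, IHl; auto. Qed.

Lemma row_full_beq n m B1 B2 y : beq n m B1 B2 -> 1 <= y <= m -> row_full n B1 y = row_full n B2 y.
Proof.
  intros H Hy; unfold row_full; apply forallb_ext_in'; intros x Hx.
  apply in_seq in Hx. apply H; lia.
Qed.

Lemma clear_rows_beq n m B1 B2 : beq n m B1 B2 -> beq n m (clear_rows n m B1) (clear_rows n m B2).
Proof.
  intros H x y Hx Hy. unfold clear_rows.
  assert (E : filter (fun y => negb (row_full n B1 y)) (seq 1 m) = filter (fun y => negb (row_full n B2 y)) (seq 1 m)).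
  { apply filter_ext_in'; intros z Hz; apply in_seq in Hz. rewrite (row_full_beq n m B1 B2); auto; lia. }
  rewrite E. set (kept := filter _ _).
  destruct ((1 <=? y) && (y <=? length kept)) eqn:E2; auto.
  apply andb_true_iff in E2; destruct E2 as [_ E2]; apply Nat.leb_le in E2.
  assert (Hin : In (nth (y-1) kept 0) kept) by (apply nth_In; lia).
  unfold kept in *; apply filter_In in Hin; destruct Hin as [Hin _]; apply in_seq in Hin.
  apply H; lia.
Qed.

Lemma place_beq n m B1 B2 p t R1 : beq n m B1 B2 -> place n m B1 p t = Some R1 ->
  exists R2, place n m B2 p t = Some R2 /\ beq n m R1 R2.
Proof.
  intros H; unfold place. rewrite !(fits_beq n m B1 B2), (follow_beq n m B1 B2); auto.
  destruct (fits n m B2 p (spawn n m p)); try discriminate.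
  destruct (follow n m B2 p t (spawn n m p)); try discriminate.
  rewrite (fits_beq n m B1 B2); auto.
  destruct (fits n m B2 p (apply_move MDown p0)); try discriminate.
  intros E; inversion E; subst. eexists; split; [reflexivity|].
  apply clear_rows_beq, add_cells_beq; auto.
Qed.

Lemma play_beq n m ps : forall B1 B2 tr R1, beq n m B1 B2 -> play n m B1 ps tr = Some R1 ->
  exists R2, play n m B2 ps tr = Some R2 /\ beq n m R1 R2.
Proof.
  induction ps as [|p ps IH]; intros B1 B2 tr R1 H E; destruct tr as [|t tr]; simpl in *; try discriminate.
  - inversion E; subst; eauto.
  - destruct (place n m B1 p t) as [R|] eqn:E1; try discriminate.
    destruct (place_beq n m B1 B2 p t R H E1) as [R' [E2 H2]]. rewrite E2.
    eapply IH; eauto.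
Qed.

Lemma play_app n m ps1 ps2 : forall B tr1 tr2 R, play n m B ps1 tr1 = Some R ->
  play n m B (ps1 ++ ps2) (tr1 ++ tr2) = play n m R ps2 tr2.
Proof.
  induction ps1 as [|p ps IH]; intros B tr1 tr2 R E; destruct tr1 as [|t tr]; simpl in *; try discriminate.
  - inversion E; subst; auto.
  - destruct (place n m B p t); try discriminate. eapply IH; eauto.
Qed.

Definition reach n m B ps B' := exists tr R, play n m B ps tr = Some R /\ beq n m R B'.

Lemma reach_nil n m B : reach n m B [] B.
Proof. exists [], B; split; [reflexivity | intros x y _ _; reflexivity]. Qed.

Lemma reach_trans n m B ps1 B1 ps2 B2 : reach n m B ps1 B1 -> reach n m B1 ps2 B2 -> reach n m B (ps1 ++ ps2) B2.
Proof.
  intros [tr1 [R1 [E1 H1]]] [tr2 [R2 [E2 H2]]].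
  destruct (play_beq n m ps2 B1 R1 tr2 R2 (beq_sym _ _ _ _ H1) E2) as [R3 [E3 H3]].
  exists (tr1 ++ tr2), R3; split.
  - rewrite (play_app n m ps1 ps2 B tr1 tr2 R1 E1); auto.
  - eapply beq_trans; [apply beq_sym; eauto | auto].
Qed.

Lemma reach_beq_l n m B0 B ps B' : beq n m B0 B -> reach n m B ps B' -> reach n m B0 ps B'.
Proof.
  intros H [tr [R [E H1]]].
  destruct (play_beq n m ps B B0 tr R (beq_sym _ _ _ _ H) E) as [R3 [E3 H3]].
  exists tr, R3; split; auto. eapply beq_trans; [apply beq_sym; eauto | auto].
Qed.

Lemma reach_beq_r n m B ps B1 B2 : reach n m B ps B1 -> beq n m B1 B2 -> reach n m B ps B2.
Proof. intros [tr [R [E H1]]] H; exists tr, R; split; auto; eapply beq_trans; eauto. Qed.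

Lemma reach_one n m B p t R B' : place n m B p t = Some R -> beq n m R B' -> reach n m B [p] B'.
Proof. intros E H; exists [t], R; simpl; rewrite E; auto. Qed.


Definition ocells (p : piece) (r : nat) : list (nat * nat) :=
  map (fun c => (Z.to_nat (fst c), Z.to_nat (snd c))) (orient_cells p r).

Lemma orient_nonneg p r a b : In (a,b) (orient_cells p r) -> (0 <= a)%Z /\ (0 <= b)%Z.
Proof.
  unfold orient_cells. assert (Hr : r mod 4 < 4) by (apply Nat.mod_upper_bound; lia).
  destruct (r mod 4) as [|[|[|[|k]]]]; try lia;
  destruct p; simpl; intros H;
  repeat (destruct H as [H|H]; [inversion H; subst; lia|]); destruct H.
Qed.

Lemma fits_intro n m B p X Y r :
  (forall a b, In (a,b) (ocells p r) -> 1 <= X + a <= n /\ 1 <= Y + b <= m /\ B (X + a) (Y + b) = false) ->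
  fits n m B p (mkPS (Z.of_nat X) (Z.of_nat Y) r) = true.
Proof.
  intros H. unfold fits, piece_cells. apply forallb_forall. intros c Hc.
  apply in_map_iff in Hc. destruct Hc as [[a b] [<- Hin]]. simpl.
  destruct (orient_nonneg _ _ _ _ Hin) as [Ha Hb].
  assert (Hin' : In (Z.to_nat a, Z.to_nat b) (ocells p r)).
  { unfold ocells; apply in_map_iff; exists (a,b); auto. }
  destruct (H _ _ Hin') as (h1 & h2 & h3).
  unfold cell_free; simpl.
  replace (Z.of_nat X + a)%Z with (Z.of_nat (X + Z.to_nat a)) by lia.
  replace (Z.of_nat Y + b)%Z with (Z.of_nat (Y + Z.to_nat b)) by lia.
  rewrite !Nat2Z.id, h3.
  repeat (apply andb_true_intro; split); try reflexivity; apply Z.leb_le; lia.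
Qed.

Lemma fits_false_intro n m B p X Y r a b :
  In (a,b) (ocells p r) -> (Y + b = 0 \/ B (X + a) (Y + b) = true) ->
  fits n m B p (mkPS (Z.of_nat X) (Z.of_nat Y) r) = false.
Proof.
  intros Hin H. unfold ocells in Hin. apply in_map_iff in Hin.
  destruct Hin as [[a' b'] [E Hin]]. inversion E; subst. simpl.
  destruct (orient_nonneg _ _ _ _ Hin) as [Ha Hb].
  apply not_true_iff_false; intro F. unfold fits in F. rewrite forallb_forall in F.
  specialize (F (Z.of_nat X + a', Z.of_nat Y + b')%Z).
  unfold piece_cells in F. simpl in F.
  assert (F' : cell_free n m B (Z.of_nat X + a', Z.of_nat Y + b')%Z = true).
  { apply F. apply in_map_iff. exists (a',b'); auto. }
  unfold cell_free in F'; simpl in F'.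
  replace (Z.of_nat X + a')%Z with (Z.of_nat (X + Z.to_nat a')) in F' by lia.
  replace (Z.of_nat Y + b')%Z with (Z.of_nat (Y + Z.to_nat b')) in F' by lia.
  rewrite !Nat2Z.id in F'.
  rewrite !andb_true_iff in F'. destruct F' as [[[[_ _] F3] _] F5].
  destruct H as [H|H].
  - rewrite H in F3. simpl in F3. discriminate.
  - rewrite H in F5. discriminate.
Qed.

Lemma existsb_ext_in' {A} (f g : A -> bool) l : (forall x, In x l -> f x = g x) -> existsb f l = existsb g l.
Proof. intros H; induction l; simpl in *; auto. rewrite H, IHl; auto. Qed.

Lemma existsb_map' {A B} (f : B -> bool) (g : A -> B) l : existsb f (map g l) = existsb (fun x => f (g x)) l.
Proof. induction l; simpl; congruence. Qed.

Lemma existsb_cells p X Y r x y :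
  existsb (fun c => Z.eqb (fst c) (Z.of_nat x) && Z.eqb (snd c) (Z.of_nat y))
     (piece_cells p (mkPS (Z.of_nat X) (Z.of_nat Y) r)) =
  existsb (fun c => (X + fst c =? x) && (Y + snd c =? y)) (ocells p r).
Proof.
  unfold piece_cells, ocells. rewrite !existsb_map'. apply existsb_ext_in'.
  intros [a b] Hin. destruct (orient_nonneg _ _ _ _ Hin). simpl.
  destruct (Nat.eqb_spec (X + Z.to_nat a) x); destruct (Nat.eqb_spec (Y + Z.to_nat b) y);
  destruct (Z.eqb_spec (Z.of_nat X + a) (Z.of_nat x)); destruct (Z.eqb_spec (Z.of_nat Y + b) (Z.of_nat y));
  simpl; auto; lia.
Qed.

Lemma follow_app n m B p l1 l2 st : follow n m B p (l1 ++ l2) st =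
  match follow n m B p l1 st with Some st' => follow n m B p l2 st' | None => None end.
Proof.
  revert st; induction l1; intros st; simpl; auto.
  destruct (fits n m B p (apply_move a st)); auto.
Qed.

Lemma follow_down n m B p X r e : forall Y,
  (forall i, i < e -> fits n m B p (mkPS X (Z.of_nat (Y + i)) r) = true) ->
  follow n m B p (repeat MDown e) (mkPS X (Z.of_nat (Y + e)) r) = Some (mkPS X (Z.of_nat Y) r).
Proof.
  induction e; intros Y H; simpl.
  - rewrite Nat.add_0_r; auto.
  - replace (Z.of_nat (Y + S e) - 1)%Z with (Z.of_nat (Y + e)) by lia.
    rewrite H by lia. apply IHe. intros; apply H; lia.
Qed.

Lemma follow_right n m B p Y r d : forall X,
  (forall i, 1 <= i <= d -> fits n m B p (mkPS (Z.of_nat (X + i)) Y r) = true) ->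
  follow n m B p (repeat MRight d) (mkPS (Z.of_nat X) Y r) = Some (mkPS (Z.of_nat (X + d)) Y r).
Proof.
  induction d; intros X H; simpl.
  - rewrite Nat.add_0_r; auto.
  - replace (Z.of_nat X + 1)%Z with (Z.of_nat (X + 1)) by lia.
    rewrite H by lia. rewrite IHd. { f_equal. f_equal. f_equal. lia. }
    intros i Hi. replace (X + 1 + i) with (X + (S i)) by lia. apply H; lia.
Qed.

Lemma follow_left n m B p Y r d : forall X,
  (forall i, i < d -> fits n m B p (mkPS (Z.of_nat (X + i)) Y r) = true) ->
  follow n m B p (repeat MLeft d) (mkPS (Z.of_nat (X + d)) Y r) = Some (mkPS (Z.of_nat X) Y r).
Proof.
  induction d; intros X H; simpl.
  - rewrite Nat.add_0_r; auto.
  - replace (Z.of_nat (X + S d) - 1)%Z with (Z.of_nat (X + d)) by lia.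
    rewrite H by lia. apply IHd. intros; apply H; lia.
Qed.

Lemma follow_rot n m B p X Y k : forall r0, r0 + k <= 3 ->
  (forall r, r0 < r <= r0 + k -> fits n m B p (mkPS X Y r) = true) ->
  follow n m B p (repeat MRotCW k) (mkPS X Y r0) = Some (mkPS X Y (r0 + k)).
Proof.
  induction k; intros r0 Hk H; cbn [follow repeat apply_move pr px py].
  - rewrite Nat.add_0_r; auto.
  - rewrite (Nat.mod_small (r0 + 1)) by lia. rewrite H by lia.
    replace (r0 + S k) with (r0 + 1 + k) by lia. apply IHk; [lia|]. intros; apply H; lia.
Qed.

Definition hmoves (X0 X : nat) : list move :=
  if X0 <=? X then repeat MRight (X - X0) else repeat MLeft (X0 - X).

Lemma follow_h n m B p Y r X0 X :
  (forall X', (X0 <= X' <= X \/ X <= X' <= X0) -> fits n m B p (mkPS (Z.of_nat X') Y r) = true) ->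
  follow n m B p (hmoves X0 X) (mkPS (Z.of_nat X0) Y r) = Some (mkPS (Z.of_nat X) Y r).
Proof.
  intros H. unfold hmoves. destruct (Nat.leb_spec X0 X).
  - rewrite follow_right. { f_equal. f_equal. f_equal. lia. }
    intros; apply H; lia.
  - remember (X0 - X) as d. replace (Z.of_nat X0) with (Z.of_nat (X + d)) by lia.
    apply follow_left. intros; apply H; lia.
Qed.

Lemma place_gen n m B p rots X0 Y0 X Y d2 :
  spawn n m p = mkPS (Z.of_nat X0) (Z.of_nat Y0) 0 ->
  rots <= 3 ->
  (forall r, r <= rots -> fits n m B p (mkPS (Z.of_nat X0) (Z.of_nat Y0) r) = true) ->
  (forall X', (X0 <= X' <= X \/ X <= X' <= X0) -> fits n m B p (mkPS (Z.of_nat X') (Z.of_nat Y0) rots) = true) ->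
  Y <= Y0 ->
  (forall Y', Y <= Y' <= Y0 -> fits n m B p (mkPS (Z.of_nat X) (Z.of_nat Y') rots) = true) ->
  (forall i, i <= d2 -> fits n m B p (mkPS (Z.of_nat (X + i)) (Z.of_nat Y) rots) = true) ->
  fits n m B p (apply_move MDown (mkPS (Z.of_nat (X + d2)) (Z.of_nat Y) rots)) = false ->
  place n m B p (repeat MRotCW rots ++ hmoves X0 X ++ repeat MDown (Y0 - Y) ++ repeat MRight d2)
   = Some (clear_rows n m (add_cells B (piece_cells p (mkPS (Z.of_nat (X + d2)) (Z.of_nat Y) rots)))).
Proof.
  intros Hsp Hr Hrot Hh HY Hv Hs Hf.
  unfold place. rewrite Hsp, Hrot by lia.
  rewrite follow_app, follow_rot by (auto; intros; apply Hrot; lia). simpl.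
  rewrite follow_app, follow_h by auto.
  rewrite follow_app. remember (Y0 - Y) as e.
  replace (Z.of_nat Y0) with (Z.of_nat (Y + e)) by lia.
  rewrite follow_down by (intros; apply Hv; lia). cbn match.
  rewrite follow_right by (intros; apply Hs; lia).
  simpl in Hf |- *. rewrite Hf. reflexivity.
Qed.

Lemma apply_down X Y r : apply_move MDown (mkPS X (Z.of_nat (S Y)) r) = mkPS X (Z.of_nat Y) r.
Proof. cbn [apply_move px py pr]. f_equal. lia. Qed.

Lemma row_full_false n B x y : 1 <= x <= n -> B x y = false -> row_full n B y = false.
Proof.
  intros Hx H. unfold row_full. apply not_true_iff_false. intro F.
  rewrite forallb_forall in F. rewrite F in H. discriminate. apply in_seq; lia.
Qed.

Lemma row_full_true n B y : (forall x, 1 <= x <= n -> B x y = true) -> row_full n B y = true.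
Proof. intros H. unfold row_full. apply forallb_forall. intros x Hx. apply in_seq in Hx. apply H; lia. Qed.

Lemma filter_all {A} (f : A -> bool) l : (forall x, In x l -> f x = true) -> filter f l = l.
Proof. induction l; simpl; intros H; auto. rewrite H, IHl; auto. Qed.
Lemma filter_none {A} (f : A -> bool) l : (forall x, In x l -> f x = false) -> filter f l = [].
Proof. induction l; simpl; intros H; auto. rewrite H, IHl; auto. Qed.

Lemma clear_block n m B k r : k + r <= m ->
  (forall y, k < y <= k + r -> row_full n B y = true) ->
  (forall y, 1 <= y <= m -> (y <= k \/ k + r < y) -> row_full n B y = false) ->
  forall x y, 1 <= y <= m ->
  clear_rows n m B x y = if y <=? k then B x y else if y <=? m - r then B x (y + r) else false.
Proof.
  intros Hkr Hf Hn x y Hy. unfold clear_rows.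
  assert (E : seq 1 m = seq 1 k ++ seq (1 + k) r ++ seq (1 + k + r) (m - k - r)).
  { rewrite <- seq_app, <- seq_app. f_equal. lia. }
  rewrite E, !filter_app.
  rewrite (filter_all _ (seq 1 k)) by (intros z Hz; apply in_seq in Hz; rewrite Hn; auto; lia).
  rewrite (filter_none _ (seq (1+k) r)) by (intros z Hz; apply in_seq in Hz; rewrite Hf; auto; lia).
  rewrite (filter_all _ (seq (1+k+r) _)) by (intros z Hz; apply in_seq in Hz; rewrite Hn; auto; lia).
  simpl app. rewrite length_app, !length_seq.
  destruct (Nat.leb_spec y k).
  - replace ((1 <=? y) && (y <=? k + (m - k - r))) with true by (symmetry; b2p; lia).
    rewrite app_nth1 by (rewrite length_seq; lia). rewrite seq_nth by lia. f_equal; lia.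
  - destruct (Nat.leb_spec y (m - r)).
    + replace ((1 <=? y) && (y <=? k + (m - k - r))) with true by (symmetry; b2p; lia).
      rewrite app_nth2 by (rewrite length_seq; lia). rewrite length_seq, seq_nth by lia. f_equal; lia.
    + replace ((1 <=? y) && (y <=? k + (m - k - r))) with false by (symmetry; b2p; lia). auto.
Qed.


Record bst := mkB { h1 : nat; h2 : nat; h3 : nat; hN : nat }.

Definition colv (b : bst) (k y : nat) : bool :=
  match k with
  | 0 => y <=? h1 b
  | 1 => y <=? h2 b
  | 2 => y <=? h3 b
  | 3 | 4 => negb (y mod 6 =? 5) || (y <=? hN b)
  | _ => true
  end.

Definition lockv (T k y : nat) : bool :=
  match k with 1 => y <=? 6 * T + 20 | 2 => y <=? 6 * T + 21 | _ => y =? 6 * T + 21 end.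

Definition model (s T : nat) (H : nat -> bst) : board := fun x y =>
  if (1 <=? x) && (x <=? 6 * s + 3) && (1 <=? y) && (y <=? 6 * T + 22) then
    if x <=? 6 * s then colv (H ((x - 1) / 6)) ((x - 1) mod 6) y
    else lockv T (x - 6 * s) y
  else false.

Definition Hupd (H : nat -> bst) (j : nat) (b : bst) : nat -> bst :=
  fun j' => if j' =? j then b else H j'.

Lemma model_top s T H x y : 6 * T + 22 < y -> model s T H x y = false.
Proof.
  intros Hy. unfold model.
  replace (y <=? 6 * T + 22) with false by (symmetry; apply Nat.leb_gt; lia).
  rewrite !andb_false_r; auto.
Qed.

Lemma model_out s T H x y : (x = 0 \/ y = 0 \/ 6 * s + 3 < x \/ 6 * T + 22 < y) -> model s T H x y = false.
Proof.
  intros Hy. unfold model.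
  replace ((1 <=? x) && (x <=? 6 * s + 3) && (1 <=? y) && (y <=? 6 * T + 22)) with false by (symmetry; b2p; lia).
  auto.
Qed.

Lemma model_bucket_eq s T H j k x y : x = 6 * j + k + 1 -> j < s -> k < 6 -> 1 <= y <= 6 * T + 22 ->
  model s T H x y = colv (H j) k y.
Proof.
  intros -> Hj Hk Hy. unfold model.
  replace ((1 <=? 6 * j + k + 1) && (6 * j + k + 1 <=? 6 * s + 3) && (1 <=? y) && (y <=? 6 * T + 22)) with true by (symmetry; b2p; lia).
  replace (6 * j + k + 1 <=? 6 * s) with true by (symmetry; b2p; lia).
  replace ((6 * j + k + 1 - 1) / 6) with j by nlia.
  replace ((6 * j + k + 1 - 1) mod 6) with k by nlia. auto.
Qed.

Lemma model_lock_eq s T H k x y : x = 6 * s + k -> 1 <= k <= 3 -> 1 <= y <= 6 * T + 22 ->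
  model s T H x y = lockv T k y.
Proof.
  intros -> Hk Hy. unfold model.
  replace ((1 <=? 6 * s + k) && (6 * s + k <=? 6 * s + 3) && (1 <=? y) && (y <=? 6 * T + 22)) with true by (symmetry; b2p; lia).
  replace (6 * s + k <=? 6 * s) with false by (symmetry; b2p; lia).
  f_equal; lia.
Qed.

Lemma model_ext s T H1 H2 : (forall j, j < s -> H1 j = H2 j) -> forall x y, model s T H1 x y = model s T H2 x y.
Proof.
  intros E x y. unfold model.
  destruct ((1 <=? x) && (x <=? 6 * s + 3) && (1 <=? y) && (y <=? 6 * T + 22)) eqn:E1; auto.
  destruct (x <=? 6 * s) eqn:E2; auto.
  b2p. rewrite E; auto. nlia.
Qed.

Definition G_m s T := 6 * T + 22 + 3 * s + rot_nbhd.

Definition bs (p : piece) : nat := match p with Sq => 2 | Ip => 4 | _ => 3 end.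

Lemma spawn_eq s T p : spawn (G_width s) (G_height s T) p =
  mkPS (Z.of_nat (3 * s)) (Z.of_nat (G_height s T + 1 - bs p)) 0.
Proof.
  unfold spawn, G_width, G_height, rot_nbhd.
  replace ((6 * s + 3) / 2) with (3 * s + 1) by nlia.
  f_equal; [lia|]. destruct p; simpl box_size; simpl bs; lia.
Qed.

Lemma bucket_result s T H j b' p X Y r :
  j < s ->
  (forall x y, existsb (fun c => (X + fst c =? x) && (Y + snd c =? y)) (ocells p r) = true ->
      6 * j + 1 <= x <= 6 * j + 5 /\ 1 <= y <= 6 * T + 22) ->
  (forall k y, k < 6 -> 1 <= y <= 6 * T + 22 ->
      colv (H j) k y || existsb (fun c => (X + fst c =? 6 * j + k + 1) && (Y + snd c =? y)) (ocells p r)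
      = colv b' k y) ->
  beq (G_width s) (G_height s T)
    (clear_rows (G_width s) (G_height s T) (add_cells (model s T H) (piece_cells p (mkPS (Z.of_nat X) (Z.of_nat Y) r))))
    (model s T (Hupd H j b')).
Proof.
  intros Hj Hi Hii.
  set (B' := add_cells _ _).
  assert (HB : forall x y, B' x y = model s T H x y || existsb (fun c => (X + fst c =? x) && (Y + snd c =? y)) (ocells p r)).
  { intros x y. unfold B', add_cells. rewrite existsb_cells. auto. }
  assert (Hex : forall x y, (x < 6 * j + 1 \/ 6 * j + 5 < x \/ 6 * T + 22 < y) ->
             existsb (fun c => (X + fst c =? x) && (Y + snd c =? y)) (ocells p r) = false).
  { intros x y Hxy. apply not_true_iff_false. intros F. apply Hi in F. lia. }
  intros x y Hx Hy.
  unfold G_width, G_height in *.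
  assert (Hnf : forall z, row_full (6 * s + 3) B' z = false).
  { intros z. destruct (Nat.le_gt_cases z (6 * T + 20)).
      - apply (row_full_false _ _ (6 * s + 3)); [lia|]. rewrite HB, Hex by lia.
        destruct (Nat.eq_0_gt_0_cases z) as [->|]; [rewrite model_out by lia; auto|].
        rewrite (model_lock_eq s T H 3) by lia. simpl; b2p; lia.
      - apply (row_full_false _ _ (6 * s + 1)); [lia|]. rewrite HB, Hex by lia.
        destruct (Nat.le_gt_cases z (6 * T + 22)).
        + rewrite (model_lock_eq s T H 1) by lia. simpl; b2p; lia.
        + rewrite model_top by lia. auto. }
  rewrite (clear_block _ _ _ (6 * T + 22 + 3 * s + rot_nbhd) 0); [ | lia | intros; lia | intros; apply Hnf | lia ].
  replace (y <=? 6 * T + 22 + 3 * s + rot_nbhd) with true by (symmetry; b2p; lia).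
  rewrite HB.
  destruct (Nat.le_gt_cases y (6 * T + 22)) as [Hy'|Hy'].
  2:{ rewrite !model_top, Hex by lia. auto. }
  destruct (Nat.le_gt_cases x (6 * s)) as [Hxs|Hxs].
  - assert (Ex : x = 6 * ((x - 1) / 6) + (x - 1) mod 6 + 1) by nlia.
    assert (Hk : (x - 1) mod 6 < 6) by (apply Nat.mod_upper_bound; lia).
    assert (Hjx : (x - 1) / 6 < s) by nlia.
    rewrite !(model_bucket_eq _ _ _ ((x - 1) / 6) ((x - 1) mod 6) x y) by (auto; lia).
    unfold Hupd. destruct (Nat.eqb_spec ((x - 1) / 6) j) as [E|E].
    + rewrite E in *. remember ((x - 1) mod 6) as k eqn:Ek. clear Ek. subst x. apply Hii; lia.
    + rewrite Hex; [apply orb_false_r|]. nlia.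
  - rewrite !(model_lock_eq _ _ _ (x - 6 * s) x y) by lia. rewrite Hex by lia. apply orb_false_r.
Qed.

Definition breach s T j ps b b' := forall H, H j = b ->
  reach (G_width s) (G_height s T) (model s T H) ps (model s T (Hupd H j b')).

Lemma breach_trans s T j ps1 ps2 b b1 b2 : breach s T j ps1 b b1 -> breach s T j ps2 b1 b2 ->
  breach s T j (ps1 ++ ps2) b b2.
Proof.
  intros R1 R2 H Hj. eapply reach_trans; [apply R1; auto|].
  eapply reach_beq_r; [apply R2; unfold Hupd; rewrite Nat.eqb_refl; auto|].
  intros x y _ _. apply model_ext. intros j' _. unfold Hupd. destruct (j' =? j); auto.
Qed.

Lemma breach_eq s T j ps b1 b2 b1' b2' : breach s T j ps b1 b2 -> b1' = b1 -> b2' = b2 -> breach s T j ps b1' b2'.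
Proof. intros; subst; auto. Qed.

Lemma breach_nil s T j b : breach s T j [] b b.
Proof.
  intros H Hj. eapply reach_beq_r; [apply reach_nil|].
  intros x y _ _. apply model_ext. intros j' _. unfold Hupd. destruct (Nat.eqb_spec j' j); subst; auto.
Qed.

Ltac cases_in H := match type of H with
 | False => destruct H
 | _ \/ _ => destruct H as [H|H]; [injection H as <- <- | cases_in H]
 end.

Ltac unfold_oc :=
  match goal with
  | H : context [ocells ?p ?r] |- _ => let l := eval vm_compute in (ocells p r) in change (ocells p r) with l in H
  | |- context [ocells ?p ?r] => let l := eval vm_compute in (ocells p r) in change (ocells p r) with l
  end.

Ltac mcell j Hj :=
  match goal with |- model ?s ?T ?H ?x ?y = _ =>
    first [ (rewrite (model_out s T H x y) by lia); reflexivity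
          | (rewrite (model_bucket_eq s T H j 0 x y) by lia); rewrite Hj; cbn [colv h1 h2 h3 hN]; bsolve
          | (rewrite (model_bucket_eq s T H j 1 x y) by lia); rewrite Hj; cbn [colv h1 h2 h3 hN]; bsolve
          | (rewrite (model_bucket_eq s T H j 2 x y) by lia); rewrite Hj; cbn [colv h1 h2 h3 hN]; bsolve
          | (rewrite (model_bucket_eq s T H j 3 x y) by lia); rewrite Hj; cbn [colv h1 h2 h3 hN]; bsolve
          | (rewrite (model_bucket_eq s T H j 4 x y) by lia); rewrite Hj; cbn [colv h1 h2 h3 hN]; bsolve
          | destruct (Nat.le_gt_cases y (6 * T + 22));
            [ first [ (rewrite (model_bucket_eq s T H j 0 x y) by lia)
                    | (rewrite (model_bucket_eq s T H j 1 x y) by lia)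
                    | (rewrite (model_bucket_eq s T H j 2 x y) by lia)
                    | (rewrite (model_bucket_eq s T H j 3 x y) by lia)
                    | (rewrite (model_bucket_eq s T H j 4 x y) by lia)];
              rewrite Hj; cbn [colv h1 h2 h3 hN]; bsolve
            | (rewrite (model_top s T H x y) by lia); reflexivity ] ]
  end.

Ltac fits_tac j Hj :=
  apply fits_intro; let a := fresh "a" in let b := fresh "b" in let Hin := fresh "Hin" in
  intros a b Hin; unfold_oc; simpl in Hin; cases_in Hin;
  unfold G_width, G_height, rot_nbhd, bs in *;
  (split; [lia | split; [lia | mcell j Hj]]).

Ltac res_tac j Hj :=
  apply bucket_result; [lia | | ];
  [ intros x y F; unfold_oc; simpl in F; b2p; lia
  | intros k y Hk Hy; unfold_oc; simpl existsb;
    destruct k as [|[|[|[|[|[|k]]]]]]; try lia; rewrite Hj; cbn [colv h1 h2 h3 hN]; bsolve ].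

Lemma sq_breach s T j h h3' N : 0 < s -> j < s -> 1 <= h -> h + 2 <= 6 * T + 22 ->
  breach s T j [Sq] (mkB h h h3' N) (mkB (h + 2) (h + 2) h3' N).
Proof.
  intros Hs Hjs Hh Hb H Hj.
  eapply reach_one.
  { apply (place_gen _ _ _ _ 0 (3 * s) (G_height s T + 1 - bs Sq) (6 * j + 1) (h + 1) 0).
    - apply spawn_eq.
    - lia.
    - intros r Hr. replace r with 0 by lia. fits_tac j Hj.
    - intros X' HX'. fits_tac j Hj.
    - unfold G_height, rot_nbhd; simpl bs; lia.
    - intros Y' HY'. fits_tac j Hj.
    - intros i Hi. replace i with 0 by lia. fits_tac j Hj.
    - replace (h + 1) with (S h) by lia. rewrite apply_down. eapply (fits_false_intro _ _ _ _ _ _ _ 0 0).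
      + vm_compute; auto.
      + right. mcell j Hj. }
  res_tac j Hj.
Qed.


Ltac pg_tac j Hj := lazymatch goal with
 | |- spawn _ _ _ = _ => apply spawn_eq
 | |- forall r, r <= _ -> _ => let r := fresh in let Hr := fresh in intros r Hr; destruct r as [|[|[|]]]; try lia; fits_tac j Hj
 | |- forall X, _ \/ _ -> _ => intros; fits_tac j Hj
 | |- forall Y, _ <= _ <= _ -> _ => intros; fits_tac j Hj
 | |- fits _ _ _ _ (apply_move _ _) = false => idtac
 | |- _ => unfold G_height, rot_nbhd; simpl bs; lia
 end.

Lemma i_breach s T j a1 a2 h N : 0 < s -> j < s -> h + 4 <= 6 * T + 22 ->
  breach s T j [Ip] (mkB a1 a2 h N) (mkB a1 a2 (h + 4) N).
Proof.
  intros Hs Hjs Hb H Hj.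
  eapply reach_one.
  { apply (place_gen _ _ _ _ 1 (3 * s) (G_height s T + 1 - bs Ip) (6 * j + 1) (h + 1) 0); pg_tac j Hj.
    replace (h + 1) with (S h) by lia. rewrite apply_down. eapply (fits_false_intro _ _ _ _ _ _ _ 2 0).
    + vm_compute; auto.
    + destruct h as [|h']; [left; lia|right; mcell j Hj]. }
  res_tac j Hj.
Qed.

Lemma lg0_breach s T j h N : 0 < s -> j < s -> 1 <= h -> h + 2 <= 6 * T + 22 ->
  breach s T j [LG] (mkB h h h N) (mkB (h + 2) (h + 1) (h + 1) N).
Proof.
  intros Hs Hjs Hh Hb H Hj.
  eapply reach_one.
  { apply (place_gen _ _ _ _ 0 (3 * s) (G_height s T + 1 - bs LG) (6 * j + 1) h 0); pg_tac j Hj.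
    destruct h as [|h']; [lia|]. rewrite apply_down. eapply (fits_false_intro _ _ _ _ _ _ _ 0 1).
    + vm_compute; auto.
    + right; mcell j Hj. }
  res_tac j Hj.
Qed.

Lemma ls_breach s T j h N : 0 < s -> j < s -> h + 3 <= 6 * T + 22 ->
  breach s T j [LS] (mkB (h + 2) (h + 1) (h + 1) N) (mkB (h + 3) (h + 3) (h + 2) N).
Proof.
  intros Hs Hjs Hb H Hj.
  eapply reach_one.
  { apply (place_gen _ _ _ _ 0 (3 * s) (G_height s T + 1 - bs LS) (6 * j + 1) (h + 1) 0); pg_tac j Hj.
    replace (h + 1) with (S h) by lia. rewrite apply_down. eapply (fits_false_intro _ _ _ _ _ _ _ 1 1).
    + vm_compute; auto.
    + right; mcell j Hj. }
  res_tac j Hj.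
Qed.

Lemma lg2_breach s T j h N : 0 < s -> j < s -> h + 4 <= 6 * T + 22 ->
  breach s T j [LG] (mkB (h + 3) (h + 3) (h + 2) N) (mkB (h + 4) (h + 4) (h + 4) N).
Proof.
  intros Hs Hjs Hb H Hj.
  eapply reach_one.
  { apply (place_gen _ _ _ _ 2 (3 * s) (G_height s T + 1 - bs LG) (6 * j + 1) (h + 3) 0); pg_tac j Hj.
    replace (h + 3) with (S (h + 2)) by lia. rewrite apply_down. eapply (fits_false_intro _ _ _ _ _ _ _ 2 0).
    + vm_compute; auto.
    + right; mcell j Hj. }
  res_tac j Hj.
Qed.

Lemma notch_breach s T j q : 0 < s -> j < s -> 6 * q + 6 <= 6 * T + 22 ->
  breach s T j [LG] (mkB (6 * q + 4) (6 * q + 4) (6 * q + 4) (6 * q)) (mkB (6 * q + 4) (6 * q + 4) (6 * q + 6) (6 * q + 6)).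
Proof.
  intros Hs Hjs Hb H Hj.
  eapply reach_one.
  { apply (place_gen _ _ _ _ 0 (3 * s) (G_height s T + 1 - bs LG) (6 * j + 1) (6 * q + 4) 2); pg_tac j Hj.
    replace (6 * q + 4) with (S (6 * q + 3)) by lia. rewrite apply_down. eapply (fits_false_intro _ _ _ _ _ _ _ 0 1).
    + vm_compute; auto.
    + right; mcell j Hj. }
  res_tac j Hj.
Qed.


Lemma breach_eq_r s T j ps b b2 b2' : breach s T j ps b b2 -> b2' = b2 -> breach s T j ps b b2'.
Proof. intros; subst; auto. Qed.

Definition Fb (d : nat) := mkB d d d d.
Definition S0 (c : nat) := mkB (c + 4) (c + 4) c c.
Definition blk := [LG; LS; LG; LG; Sq].

Lemma block_breach s T j q : 0 < s -> j < s -> 1 <= q -> 6 * q + 6 <= 6 * T + 22 ->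
  breach s T j blk (Fb (6 * q)) (Fb (6 * q + 6)).
Proof.
  intros Hs Hj Hq Hb. unfold blk, Fb.
  change [LG; LS; LG; LG; Sq] with ([LG] ++ [LS] ++ [LG] ++ [LG] ++ [Sq]).
  eapply breach_trans; [apply lg0_breach; lia|].
  eapply breach_trans; [apply ls_breach; lia|].
  eapply breach_trans; [apply lg2_breach; lia|].
  eapply breach_trans; [apply notch_breach; lia|].
  eapply breach_eq_r; [apply sq_breach; lia| f_equal; lia].
Qed.

Lemma blocks_breach s T j t : 0 < s -> j < s -> forall q, 1 <= q -> 6 * q + 6 * t <= 6 * T + 22 ->
  breach s T j (concat (repeat blk t)) (Fb (6 * q)) (Fb (6 * q + 6 * t)).
Proof.
  intros Hs Hj. induction t; intros q Hq Hb.
  - eapply breach_eq_r; [apply breach_nil | f_equal; lia].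
  - change (concat (repeat blk (S t))) with (blk ++ concat (repeat blk t)). eapply breach_trans; [apply block_breach; lia|].
    apply (breach_eq _ _ _ _ (Fb (6 * (q + 1))) (Fb (6 * (q + 1) + 6 * t))); [apply IHt; lia | unfold Fb; f_equal; lia | unfold Fb; f_equal; lia].
Qed.

Definition elem (ai : nat) : list piece :=
  [Ip; LG; Sq] ++ concat (repeat [LG; LS; LG; LG; Sq] ai) ++ [Sq; Sq].

Lemma elem_breach s T j ai q : 0 < s -> j < s -> 6 * q + 6 * ai + 10 <= 6 * T + 22 ->
  breach s T j (elem ai) (S0 (6 * q)) (S0 (6 * q + 6 * ai + 6)).
Proof.
  intros Hs Hj Hb. unfold elem, S0.
  change ([Ip; LG; Sq] ++ concat (repeat [LG; LS; LG; LG; Sq] ai) ++ [Sq; Sq]) with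
    ([Ip] ++ [LG] ++ [Sq] ++ concat (repeat blk ai) ++ [Sq] ++ [Sq]).
  eapply breach_trans; [apply i_breach; lia|].
  eapply breach_trans; [apply notch_breach; lia|].
  eapply breach_trans; [apply sq_breach; lia|].
  eapply breach_trans; [apply (breach_eq _ _ _ _ (Fb (6 * (q + 1))) (Fb (6 * (q + 1) + 6 * ai))); [apply blocks_breach; lia | unfold Fb; f_equal; lia | reflexivity ]|].
  unfold Fb.
  eapply breach_trans; [apply sq_breach; lia|].
  eapply breach_eq_r; [apply sq_breach; lia| f_equal; lia].
Qed.

Lemma firstn_S_app {A} (l : list A) d : forall i, i < length l -> firstn (S i) l = firstn i l ++ [nth i l d].
Proof.
  induction l; intros i Hi; simpl in *; [lia|].
  destruct i; simpl; auto. rewrite <- IHl by lia. auto.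
Qed.

Definition psum (g : nat -> nat) (a : list nat) i j :=
  list_sum (map (fun k => if g k =? j then nth k a 0 else 0) (seq 0 i)).
Definition pcnt (g : nat -> nat) i j := length (filter (fun k => g k =? j) (seq 0 i)).

Lemma psum_S g a i j : psum g a (S i) j = psum g a i j + (if g i =? j then nth i a 0 else 0).
Proof. unfold psum. rewrite seq_S, map_app, list_sum_app. simpl. lia. Qed.
Lemma pcnt_S g i j : pcnt g (S i) j = pcnt g i j + (if g i =? j then 1 else 0).
Proof. unfold pcnt. rewrite seq_S, filter_app, length_app. simpl. destruct (g i =? j); simpl; lia. Qed.

Lemma psum_mono g a j i d : psum g a i j <= psum g a (i + d) j.
Proof. induction d; [rewrite Nat.add_0_r; lia|]. rewrite Nat.add_succ_r, psum_S. lia. Qed.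
Lemma pcnt_mono g j i d : pcnt g i j <= pcnt g (i + d) j.
Proof. induction d; [rewrite Nat.add_0_r; lia|]. rewrite Nat.add_succ_r, pcnt_S. lia. Qed.

Definition Hst g a i : nat -> bst := fun j => S0 (6 * psum g a i j + 6 * pcnt g i j).

Lemma prefix_reach s T a g : 0 < s -> length a = 3 * s ->
  (forall i, i < 3 * s -> g i < s) ->
  (forall j, j < s -> psum g a (3 * s) j = T) ->
  (forall j, j < s -> pcnt g (3 * s) j = 3) ->
  forall i, i <= length a ->
  reach (G_width s) (G_height s T) (model s T (Hst g a 0)) (flat_map elem (firstn i a)) (model s T (Hst g a i)).
Proof.
  intros Hs Hl Hg Hsum Hcnt. induction i; intros Hi.
  - simpl. apply reach_nil.
  - rewrite (firstn_S_app a 0) by lia. rewrite flat_map_app.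
    eapply reach_trans; [apply IHi; lia|].
    simpl flat_map. rewrite app_nil_r.
    set (j := g i).
    assert (Hj : j < s) by (apply Hg; lia).
    set (q := psum g a i j + pcnt g i j).
    assert (Hps := psum_mono g a j (S i) (3 * s - S i)).
    assert (Hpc := pcnt_mono g j (S i) (3 * s - S i)).
    replace (S i + (3 * s - S i)) with (3 * s) in Hps, Hpc by lia.
    rewrite Hsum, psum_S in Hps by auto. rewrite Hcnt, pcnt_S in Hpc by auto.
    unfold j in Hps, Hpc. rewrite Nat.eqb_refl in Hps, Hpc. fold j in Hps, Hpc.
    eapply reach_beq_r.
    + apply (elem_breach s T j (nth i a 0) q Hs Hj); [unfold q; lia|].
      unfold Hst, q, S0. f_equal; lia.
    + intros x y _ _. apply model_ext. intros j' Hj'. unfold Hupd, Hst.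
      rewrite psum_S, pcnt_S. fold j.
      destruct (Nat.eqb_spec j' j).
      * subst j'. rewrite Nat.eqb_refl. unfold S0, q. f_equal; lia.
      * replace (j =? j') with false by (symmetry; apply Nat.eqb_neq; auto).
        f_equal; lia.
Qed.


Definition Hf T := mkB (6 * T + 22) (6 * T + 22) (6 * T + 22) (6 * T + 18).

Definition fullv s T x y : bool :=
  (1 <=? x) && (x <=? 6 * s + 3) && (1 <=? y) && (y <=? 6 * T + 22) &&
  ((x <=? 6 * s) || ((x =? 6 * s + 1) && (y <=? 6 * T + 20)) || ((x =? 6 * s + 2) && (y <=? 6 * T + 21))
   || ((x =? 6 * s + 3) && (y =? 6 * T + 21))).

Definition full1 s (Hh : nat) : board := fun x y =>
  (1 <=? x) && (x <=? 6 * s + 2) && (1 <=? y) && (y <=? Hh).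

Lemma model_fullv s T H : (forall j, j < s -> H j = Hf T) -> forall x y, model s T H x y = fullv s T x y.
Proof.
  intros HH x y. unfold fullv.
  destruct ((1 <=? x) && (x <=? 6 * s + 3) && (1 <=? y) && (y <=? 6 * T + 22)) eqn:E.
  2:{ unfold model. rewrite E. auto. }
  cbn [andb]. pose proof E as E0; rewrite !andb_true_iff, !Nat.leb_le in E0.
  destruct (Nat.le_gt_cases x (6 * s)).
  - rewrite (model_bucket_eq s T H ((x - 1) / 6) ((x - 1) mod 6) x y) by nlia.
    rewrite HH by nlia. replace (x <=? 6 * s) with true by (symmetry; b2p; lia). cbn [orb].
    assert (Hk : (x - 1) mod 6 < 6) by (apply Nat.mod_upper_bound; lia).
    unfold Hf. destruct ((x - 1) mod 6) as [|[|[|[|[|[|k]]]]]]; cbn [colv h1 h2 h3 hN]; try lia; bsolve.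
  - rewrite (model_lock_eq s T H (x - 6 * s) x y) by lia.
    assert (Hx3 : x - 6 * s = 1 \/ x - 6 * s = 2 \/ x - 6 * s = 3) by lia.
    destruct Hx3 as [Hx3|[Hx3|Hx3]]; rewrite Hx3; cbn [lockv]; bsolve.
Qed.

Ltac fits_tac2 :=
  apply fits_intro; let a := fresh "a" in let b := fresh "b" in let Hin := fresh "Hin" in
  intros a b Hin; unfold_oc; simpl in Hin; cases_in Hin;
  unfold G_width, G_height, rot_nbhd, bs in *;
  (split; [lia | split; [lia | try (match goal with HM : forall x y, model _ _ _ x y = _ |- _ => rewrite HM end); unfold full1, fullv; bsolve]]).

Ltac pg2_tac := lazymatch goal with
 | |- spawn _ _ _ = _ => apply spawn_eq
 | |- forall r, r <= _ -> _ => let r := fresh in let Hr := fresh in intros r Hr; destruct r as [|[|[|]]]; try lia; fits_tac2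
 | |- forall X, _ \/ _ -> _ => intros; fits_tac2
 | |- forall Y, _ <= _ <= _ -> _ => intros; fits_tac2
 | |- fits _ _ _ _ (apply_move _ _) = false => idtac
 | |- _ => unfold G_height, rot_nbhd; simpl bs; lia
 end.

Lemma rg_reach s T H : 0 < s -> (forall j, j < s -> H j = Hf T) ->
  reach (G_width s) (G_height s T) (model s T H) [RG] (full1 s (6 * T + 20)).
Proof.
  intros Hs HH. assert (HMF := model_fullv s T H HH).
  eapply reach_one.
  { apply (place_gen _ _ _ _ 2 (3 * s) (G_height s T + 1 - bs RG) (6 * s + 1) (6 * T + 21) 0); pg2_tac.
    replace (6 * T + 21) with (S (6 * T + 20)) by lia. rewrite apply_down.
    eapply (fits_false_intro _ _ _ _ _ _ _ 0 0); [vm_compute; auto | right; rewrite HMF; unfold fullv; bsolve]. }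
  set (B' := add_cells _ _).
  assert (HB : forall x y, B' x y = fullv s T x y ||
     existsb (fun c => (6 * s + 1 + 0 + fst c =? x) && (6 * T + 21 + snd c =? y)) (ocells RG 2)).
  { intros; unfold B', add_cells; rewrite existsb_cells, HMF; auto. }
  unfold_oc. cbn [existsb fst snd] in HB.
  intros x y Hx Hy. unfold G_width, G_height, rot_nbhd in *.
  rewrite (clear_block _ _ _ (6 * T + 20) 2); [ | lia | | | lia].
  - rewrite !HB. unfold fullv, full1.
    destruct (y <=? 6 * T + 20) eqn:E1; [|destruct (y <=? 6 * T + 22 + 3 * s + 4 - 2) eqn:E2]; bsolve.
  - intros z Hz. apply row_full_true. intros x' Hx'. rewrite HB. unfold fullv. bsolve.
  - intros z Hz Hz'. apply (row_full_false _ _ (6 * s + 3)); [lia|]. rewrite HB. unfold fullv. bsolve.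
Qed.

Lemma if_reach s T k : 0 < s -> 4 * (k + 1) <= 6 * T + 20 ->
  reach (G_width s) (G_height s T) (full1 s (4 * (k + 1))) [Ip] (full1 s (4 * k)).
Proof.
  intros Hs Hk. assert (HMF : True) by auto.
  eapply reach_one.
  { apply (place_gen _ _ _ _ 1 (3 * s) (G_height s T + 1 - bs Ip) (6 * s + 1) 1 0); pg2_tac.
    rewrite apply_down.
    eapply (fits_false_intro _ _ _ _ _ _ _ 2 0); [vm_compute; auto | left; lia]. }
  set (B' := add_cells _ _).
  assert (HB : forall x y, B' x y = full1 s (4 * (k + 1)) x y ||
     existsb (fun c => (6 * s + 1 + 0 + fst c =? x) && (1 + snd c =? y)) (ocells Ip 1)).
  { intros; unfold B', add_cells; rewrite existsb_cells; auto. }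
  unfold_oc. cbn [existsb fst snd] in HB.
  intros x y Hx Hy. unfold G_width, G_height, rot_nbhd in *.
  rewrite (clear_block _ _ _ 0 4); [ | lia | | | lia].
  - rewrite !HB. unfold full1.
    destruct (y <=? 0) eqn:E1; [|destruct (y <=? 6 * T + 22 + 3 * s + 4 - 4) eqn:E2]; bsolve.
  - intros z Hz. apply row_full_true. intros x' Hx'. rewrite HB. unfold full1. bsolve.
  - intros z Hz Hz'. apply (row_full_false _ _ (6 * s + 3)); [lia|]. rewrite HB. unfold full1. bsolve.
Qed.


Definition Hmid T k : nat -> bst := fun j => if j <? k then Hf T else S0 (6 * T + 18).

Lemma is_phase s T H : 0 < s -> (forall j, j < s -> H j = S0 (6 * T + 18)) ->
  forall k, k <= s -> reach (G_width s) (G_height s T) (model s T H) (repeat Ip k) (model s T (Hmid T k)).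
Proof.
  intros Hs HH. induction k; intros Hk.
  - eapply reach_beq_r; [apply reach_nil|]. intros x y _ _. apply model_ext.
    intros j Hj. unfold Hmid. simpl. auto.
  - change (repeat Ip (S k)) with (Ip :: repeat Ip k). rewrite repeat_cons.
    eapply reach_trans; [apply IHk; lia|].
    eapply reach_beq_r.
    + apply (i_breach s T k (6 * T + 18 + 4) (6 * T + 18 + 4) (6 * T + 18) (6 * T + 18)); try lia.
      unfold Hmid; cbv beta. replace (k <? k) with false by (symmetry; b2p; lia). reflexivity.
    + intros x y _ _. apply model_ext. intros j Hj. unfold Hupd, Hmid.
      destruct (Nat.eqb_spec j k).
      * subst. replace (k <? k) with false by (symmetry; b2p; lia). replace (k <? S k) with true by (symmetry; b2p; lia).
        unfold Hf; f_equal; lia.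
      * destruct (Nat.ltb_spec j k); destruct (Nat.ltb_spec j (S k)); auto; lia.
Qed.

Lemma ifs_reach s T K : 0 < s -> 4 * K <= 6 * T + 20 ->
  reach (G_width s) (G_height s T) (full1 s (4 * K)) (repeat Ip K) (full1 s 0).
Proof.
  intros Hs. induction K; intros HK.
  - simpl. apply reach_nil.
  - change (repeat Ip (S K)) with ([Ip] ++ repeat Ip K).
    eapply reach_trans; [|apply IHK; lia].
    replace (4 * S K) with (4 * (K + 1)) by lia. apply if_reach; lia.
Qed.

Lemma init_eq s T x y : G_init s T x y = model s T (fun _ => mkB 4 4 0 0) x y.
Proof.
  unfold G_init, model.
  destruct ((1 <=? x) && (x <=? 6 * s + 3) && (1 <=? y) && (y <=? 6 * T + 22)) eqn:E; auto.
  destruct (x <=? 6 * s); [|reflexivity].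
  assert (Hy : (y <=? 0) = false) by (b2p; lia).
  destruct ((x - 1) mod 6) as [|[|[|[|[|[|k]]]]]]; cbn [colv h1 h2 h3 hN]; auto;
  rewrite Hy; auto; rewrite orb_false_r; auto.
Qed.

Theorem theorem4 (s T : nat) (a : list nat) :
  0 < s ->
  three_partition_instance s T a ->
  tp_prop1 s T a -> tp_prop2 T -> tp_prop3 s T a ->
  yes_instance s T a ->
  exists (traj : list (list move)) (B : board),
    play (G_width s) (G_height s T) (G_init s T) (G_pieces s T a) traj = Some B /\
    (forall x y, 1 <= x <= G_width s -> 1 <= y <= G_height s T -> B x y = false).
Proof.
  intros Hs [Hl [Hb Hsum]] P1 P2 P3 [g [Hg Hgs]].
  assert (Hsum' : forall j, j < s -> psum g a (3 * s) j = T).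
  { intros j Hj. rewrite <- (Hgs j Hj). unfold sum_sel, psum. rewrite Hl. reflexivity. }
  assert (Hcnt : forall j, j < s -> pcnt g (3 * s) j = 3).
  { intros j Hj. unfold pcnt. rewrite <- Hl. exact (P1 _ (Hgs j Hj)). }
  assert (R1 : reach (G_width s) (G_height s T) (G_init s T) (flat_map elem a) (model s T (Hst g a (3 * s)))).
  { eapply reach_beq_l.
    2:{ assert (E := prefix_reach s T a g Hs Hl Hg Hsum' Hcnt (length a) (le_n _)). rewrite firstn_all, Hl in E. exact E. }
    intros x y _ _. rewrite init_eq. apply model_ext. intros j _. reflexivity. }
  assert (R2 : reach (G_width s) (G_height s T) (model s T (Hst g a (3 * s))) (repeat Ip s) (model s T (Hmid T s))).
  { apply is_phase; auto. intros j Hj. unfold Hst. rewrite Hsum', Hcnt by auto. f_equal; lia. }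
  assert (R3 : reach (G_width s) (G_height s T) (model s T (Hmid T s)) [RG] (full1 s (6 * T + 20))).
  { apply rg_reach; auto. intros j Hj. unfold Hmid. replace (j <? s) with true by (symmetry; b2p; lia). auto. }
  destruct P2 as [t Ht].
  assert (R4 : reach (G_width s) (G_height s T) (full1 s (6 * T + 20)) (repeat Ip (3 * T / 2 + 5)) (full1 s 0)).
  { replace (6 * T + 20) with (4 * (3 * T / 2 + 5)) by (subst T; nlia). apply ifs_reach; [auto | subst T; nlia]. }
  assert (R := reach_trans _ _ _ _ _ _ _ R1 (reach_trans _ _ _ _ _ _ _ R2 (reach_trans _ _ _ _ _ _ _ R3 R4))).
  destruct R as [tr [B [E HB]]].
  exists tr, B. split; [exact E|].
  intros x y Hx Hy. rewrite HB by auto. unfold full1. b2p. lia.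
Qed.
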